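(* Let $n\ge1$, $a\ge0$, $A=|\psi\rangle\langle\psi|$ for an $n$-qubit pure state $|\psi\rangle$, and let $U$ be a $(2,a,0)$-block-encoding of $A$. Then, using $O(1)$ queries to $U$ (and its controlled version and inverse), one can implement a unitary that is a $(1,a+3,0)$-block-encoding of $I-2A$.
   Context: For an $n$-qubit operator $A$, a unitary $U$ on $n+a$ qubits is an $(\alpha,a,\varepsilon)$-block-encoding of $A$ if $\|\alpha(I_n\otimes\langle0|^{\otimes a})U(I_n\otimes|0\rangle^{\otimes a})-A\|\le\varepsilon$ (operator norm). *)

(* Defs.v *)
(* Complex scalars: an arbitrary numClosedFieldType C
   (e.g. the complex numbers); conjugation is Num.conj (notation x^* ). *)
From HB Require Import structures.
From mathcomp Require Import all_boot all_order all_algebra.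
Set Implicit Arguments. Unset Strict Implicit. Unset Printing Implicit Defensive.
Import Order.TTheory GRing.Theory Num.Theory.
Local Open Scope ring_scope.

(* The basis index of C^m (x) C^n is (i, j) |-> i * n + j  (first factor major). *)
Lemma pidx_proof m n (i : 'I_m) (j : 'I_n) : (i * n + j < m * n)%N.
Proof.
have ltin := ltn_ord i; have ltjn := ltn_ord j.
apply: (@leq_trans (i * n + n)); first by rewrite ltn_add2l.
by rewrite -mulSnr leq_mul2r ltin orbT.
Qed.
Definition pidx m n (i : 'I_m) (j : 'I_n) : 'I_(m * n) := Ordinal (pidx_proof i j).

Lemma fstI_proof m n (k : 'I_(m * n)) : (k %/ n < m)%N.
Proof.
case: n k => [|n] k; first by case: k => k; rewrite muln0.
by rewrite ltn_divLR // ltn_ord.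
Qed.
Lemma sndI_proof m n (k : 'I_(m * n)) : (k %% n < n)%N.
Proof.
case: n k => [|n] k; first by case: k => k; rewrite muln0.
by rewrite ltn_pmod.
Qed.
Definition fstI m n (k : 'I_(m * n)) : 'I_m := Ordinal (fstI_proof k).
Definition sndI m n (k : 'I_(m * n)) : 'I_n := Ordinal (sndI_proof k).

Section Quantum.
Variable C : numClosedFieldType.

Definition kron m1 n1 m2 n2 (A : 'M[C]_(m1, n1)) (B : 'M[C]_(m2, n2))
  : 'M[C]_(m1 * m2, n1 * n2) :=
  \matrix_(k, l) (A (fstI k) (fstI l) * B (sndI k) (sndI l)).

Definition adjmx m n (M : 'M[C]_(m, n)) : 'M[C]_(n, m) := (map_mx Num.conj M)^T.

Definition unitarymx d (U : 'M[C]_d) : Prop :=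
  U *m adjmx U = 1%:M /\ adjmx U *m U = 1%:M.

Definition vnorm2 d (v : 'cV[C]_d) : C := \sum_i `|v i 0| ^+ 2.

Definition opnorm_le m n (M : 'M[C]_(m, n)) (eps : C) : Prop :=
  0 <= eps /\ forall v : 'cV[C]_n, vnorm2 (M *m v) <= eps ^+ 2 * vnorm2 v.

Lemma zero_idx_proof b : (0 < 2 ^ b)%N. Proof. by rewrite expn_gt0. Qed.
Definition zero_idx b : 'I_(2 ^ b) := Ordinal (zero_idx_proof b).

(* (I_n (x) <0|^{(x)b}) U (I_n (x) |0>^{(x)b}) ; system = first factor *)
Definition topblock n b (U : 'M[C]_(2 ^ n * 2 ^ b)) : 'M[C]_(2 ^ n) :=
  \matrix_(i, j) U (pidx i (zero_idx b)) (pidx j (zero_idx b)).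

Definition block_encoding n b (alpha eps : C) (U : 'M[C]_(2 ^ n * 2 ^ b))
  (A : 'M[C]_(2 ^ n)) : Prop :=
  unitarymx U /\ opnorm_le (alpha *: topblock U - A) eps.

(* The circuit acts on n + a + 3 qubits = system (n) (x) U's ancilla (a) (x) 3
   extra qubits.  A query applies U, U^dagger, controlled-U or controlled-U^dagger
   to the first n + a qubits (control = most significant extra qubit); any other
   placement of a query is obtained by conjugating with fixed (oracle-independent)
   unitaries, which are allowed between queries. *)
Inductive query := QU | QUinv | QcU | QcUinv.

Lemma qdim n a : (2 ^ n * 2 ^ (a + 3) = (2 ^ n * 2 ^ a) * 8)%N.
Proof. by rewrite expnD mulnA. Qed.

(* projector onto the extra-register states whose control qubit is 1 / 0 *)
Definition ctrl1 : 'M[C]_8 := \matrix_(i, j) ((i == j) && (4 <= i)%N)%:R.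
Definition ctrl0 : 'M[C]_8 := \matrix_(i, j) ((i == j) && (i < 4)%N)%:R.

Definition query_gate n a (q : query) (U : 'M[C]_(2 ^ n * 2 ^ a))
  : 'M[C]_(2 ^ n * 2 ^ (a + 3)) :=
  let V := match q with QU | QcU => U | QUinv | QcUinv => adjmx U end in
  let G := match q with
           | QU | QUinv => kron V (1%:M : 'M[C]_8)
           | QcU | QcUinv => kron V ctrl1 + kron (1%:M) ctrl0 end in
  castmx (esym (qdim n a), esym (qdim n a)) G.

Record circuit n a := Circuit {
  c_init : 'M[C]_(2 ^ n * 2 ^ (a + 3));
  c_steps : seq (query * 'M[C]_(2 ^ n * 2 ^ (a + 3))) }.

Definition nqueries n a (c : circuit n a) : nat := size (c_steps c).

Definition circuit_fixed_unitary n a (c : circuit n a) : Prop :=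
  unitarymx (c_init c) /\ forall i, (i < size (c_steps c))%N -> unitarymx (nth (QU, 1%:M) (c_steps c) i).2.

(* the implemented unitary: V_k Q_k ... V_1 Q_1 V_0 *)
Definition run n a (c : circuit n a) (U : 'M[C]_(2 ^ n * 2 ^ a))
  : 'M[C]_(2 ^ n * 2 ^ (a + 3)) :=
  foldl (fun M s => s.2 *m query_gate s.1 U *m M) (c_init c) (c_steps c).

End Quantum.

(* Main.v *)
Require Import Defs.
From mathcomp Require Import all_boot all_order all_algebra.
From mathcomp Require Import ring mxtens.
Import Order.TTheory GRing.Theory Num.Theory.
Local Open Scope ring_scope.
Set Implicit Arguments. Unset Strict Implicit. Unset Printing Implicit Defensive.

Section Alg.
Variable C : numClosedFieldType.

Lemma adjmx_mul m n p (A : 'M[C]_(m, n)) (B : 'M[C]_(n, p)) :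
  adjmx (A *m B) = adjmx B *m adjmx A.
Proof.
apply/matrixP => i j; rewrite !mxE rmorph_sum; apply: eq_bigr => k _.
by rewrite !mxE rmorphM mulrC.
Qed.

Lemma adjmxD m n (A B : 'M[C]_(m, n)) : adjmx (A + B) = adjmx A + adjmx B.
Proof. by apply/matrixP => i j; rewrite !mxE rmorphD. Qed.

Lemma adjmxN m n (A : 'M[C]_(m, n)) : adjmx (- A) = - adjmx A.
Proof. by apply/matrixP => i j; rewrite !mxE rmorphN. Qed.

Lemma adjmxB m n (A B : 'M[C]_(m, n)) : adjmx (A - B) = adjmx A - adjmx B.
Proof. by rewrite adjmxD adjmxN. Qed.

Lemma adjmxZ m n (c : C) (A : 'M[C]_(m, n)) : adjmx (c *: A) = c^* *: adjmx A.
Proof. by apply/matrixP => i j; rewrite !mxE rmorphM. Qed.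

Lemma adjmx1 m : adjmx (1%:M : 'M[C]_m) = 1%:M.
Proof. by apply/matrixP => i j; rewrite !mxE conjC_nat eq_sym. Qed.

Lemma adjmxK m n (A : 'M[C]_(m, n)) : adjmx (adjmx A) = A.
Proof. by apply/matrixP => i j; rewrite !mxE conjCK. Qed.

Lemma conj2 : (2 : C)^* = 2. Proof. exact: conjC_nat. Qed.

Lemma key d (Q Pi P : 'M[C]_d) :
  Q *m adjmx Q = 1%:M -> adjmx Q *m Q = 1%:M ->
  Pi *m Pi = Pi -> adjmx Pi = Pi -> P *m P = P -> adjmx P = P ->
  Pi *m Q *m Pi = 2^-1 *: P ->
  let R := 2 *: Pi - 1%:M in
  let V := Q *m R *m adjmx Q *m R *m Q in
  Pi *m (adjmx V *m (1%:M - 2 *: Pi) *m V) *m Pi = Pi - 2 *: P.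
Proof.
move=> QQ QQ' PiPi PiH PP PH HB R V.
set B := Pi *m Q *m Pi.
have BH : adjmx B = Pi *m adjmx Q *m Pi by rewrite /B !adjmx_mul PiH mulmxA.
have RH : adjmx R = R by rewrite /R adjmxB adjmxZ conj2 PiH adjmx1.
have RR : R *m R = 1%:M.
  rewrite /R mulmxBl !mulmxBr !mul1mx mulmx1 -scalemxAl -scalemxAr PiPi scalerA.
  by rewrite mulr_natl mulr2n scalerDl addrK opprB addrC subrK.
have QK m (X : 'M[C]_(m, d)) : X *m Q *m adjmx Q = X by rewrite -mulmxA QQ mulmx1.
have Q'K m (X : 'M[C]_(m, d)) : X *m adjmx Q *m Q = X by rewrite -mulmxA QQ' mulmx1.
have RK m (X : 'M[C]_(m, d)) : X *m R *m R = X by rewrite -mulmxA RR mulmx1.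
have PiK m (X : 'M[C]_(m, d)) : X *m Pi *m Pi = X *m Pi by rewrite -mulmxA PiPi.
have VH : adjmx V = adjmx Q *m R *m Q *m R *m adjmx Q.
  by rewrite /V !adjmx_mul RH adjmxK !mulmxA.
have VV : adjmx V *m V = 1%:M.
  by rewrite VH /V !mulmxA Q'K RK QK RK QQ'.
have c2 : (2 : C) != 0 by rewrite pnatr_eq0.
set c : C := 2^-1.
have cH : c^* = c.
  by rewrite /c fmorphV rmorph_nat.
have BP : B = c *: P by [].
have BQB : B *m adjmx Q *m B = (c * c * c) *: P.
  have -> : B *m adjmx Q *m B = B *m adjmx B *m B.
    by rewrite BH /B !mulmxA !PiK.
  by rewrite BP adjmxZ PH cH -!scalemxAl -!scalemxAr !PP !scalerA -scalemxAl PP scalerA.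
have h1 : Pi *m Q *m R = 2 *: B - Pi *m Q.
  by rewrite /R mulmxBr mulmx1 -scalemxAr.
have h2 : R *m Q *m Pi = 2 *: B - Q *m Pi.
  by rewrite /R !mulmxBl !mul1mx -!scalemxAl.
have PVP : Pi *m V *m Pi = - P.
  have -> : Pi *m V *m Pi = (Pi *m Q *m R) *m adjmx Q *m (R *m Q *m Pi).
    by rewrite /V !mulmxA.
  rewrite h1 h2 mulmxBr !mulmxBl -!scalemxAl -!scalemxAr BQB.
  have -> : B *m adjmx Q *m (Q *m Pi) = B.
    by rewrite mulmxA Q'K /B PiK.
  have -> : Pi *m Q *m adjmx Q *m B = B.
    by rewrite QK /B !mulmxA PiPi.
  have -> : Pi *m Q *m adjmx Q *m (Q *m Pi) = B.
    by rewrite QK mulmxA.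
  rewrite BP !scalerA.
  rewrite -!scalerBl -scaleN1r; congr (_ *: _).
  by rewrite /c; field.
have E1 : adjmx V *m (1%:M - 2 *: Pi) *m V = adjmx V *m V - 2 *: (adjmx V *m Pi *m V).
  by rewrite mulmxBr mulmx1 mulmxBl -scalemxAr -scalemxAl.
have E2 : Pi *m (adjmx V *m Pi *m V) *m Pi = (Pi *m adjmx V *m Pi) *m (Pi *m V *m Pi).
  by rewrite !mulmxA PiK.
have E3 : Pi *m adjmx V *m Pi = - P.
  have <- : adjmx (Pi *m V *m Pi) = Pi *m adjmx V *m Pi by rewrite !adjmx_mul PiH mulmxA.
  by rewrite PVP adjmxN PH.
rewrite E1 mulmxBr mulmxBl -scalemxAr -scalemxAl E2 E3 PVP VV mulmx1 PiPi.
by rewrite mulNmx mulmxN opprK PP.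
Qed.

End Alg.

Section Kron.
Variable C : numClosedFieldType.

Lemma kron_tens m1 n1 m2 n2 (A : 'M[C]_(m1, n1)) (B : 'M[C]_(m2, n2)) :
  kron A B = A *t B.
Proof.
by apply/matrixP => k l; rewrite !mxE; congr (A _ _ * B _ _); apply: val_inj.
Qed.

Lemma kron_mul m n p q r s (A : 'M[C]_(m,n)) (B : 'M[C]_(p,q)) (X : 'M[C]_(n, r)) (Y : 'M[C]_(q, s)) :
  kron A B *m kron X Y = kron (A *m X) (B *m Y).
Proof. by rewrite !kron_tens tensmx_mul. Qed.

Lemma kron11 p q : kron (1%:M : 'M[C]_p) (1%:M : 'M[C]_q) = 1%:M.
Proof.
rewrite kron_tens; apply/matrixP => k l.
case: (mxtens_indexP k) => i j; case: (mxtens_indexP l) => i' j'.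
rewrite tensmxE !mxE -natrM mulnb; congr (_%:R).
by rewrite (inj_eq (can_inj (@mxtens_indexK _ _))) xpair_eqE.
Qed.

Lemma adjmx_kron m1 n1 m2 n2 (A : 'M[C]_(m1, n1)) (B : 'M[C]_(m2, n2)) :
  adjmx (kron A B) = kron (adjmx A) (adjmx B).
Proof. by apply/matrixP => k l; rewrite !mxE rmorphM. Qed.

Lemma adjmx_cast m n m' n' (e1 : m = m') (e2 : n = n') (M : 'M[C]_(m, n)) :
  adjmx (castmx (e1, e2) M) = castmx (e2, e1) (adjmx M).
Proof. by case: m' / e1; case: n' / e2. Qed.

Lemma castmx_mulmx p q (e : p = q) (X Y : 'M[C]_p) :
  castmx (e, e) X *m castmx (e, e) Y = castmx (e, e) (X *m Y).
Proof. by case: q / e. Qed.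

Lemma castmx_1 p q (e : p = q) : castmx (e, e) (1%:M : 'M[C]_p) = 1%:M.
Proof. by case: q / e. Qed.

Lemma fstI_pidx p q (i : 'I_p) (j : 'I_q) : fstI (pidx i j) = i.
Proof.
have q0 : (0 < q)%N by apply: leq_ltn_trans (ltn_ord j).
by apply: val_inj => /=; rewrite divnMDl // divn_small ?addn0.
Qed.

Lemma sndI_pidx p q (i : 'I_p) (j : 'I_q) : sndI (pidx i j) = j.
Proof. by apply: val_inj => /=; rewrite modnMDl modn_small. Qed.

Lemma pidx_eq p q (i i' : 'I_p) (j j' : 'I_q) :
  (pidx i j == pidx i' j') = (i == i') && (j == j').
Proof.
apply/eqP/andP => [h|[/eqP -> /eqP ->]] //.
by split; apply/eqP; [rewrite -(fstI_pidx i j) h fstI_pidx | rewrite -(sndI_pidx i j) h sndI_pidx].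
Qed.

Lemma unitary_mul d (A B : 'M[C]_d) : Defs.unitarymx A -> Defs.unitarymx B -> Defs.unitarymx (A *m B).
Proof.
move=> [A1 A2] [B1 B2]; rewrite /Defs.unitarymx adjmx_mul; split.
  by rewrite mulmxA -(mulmxA A) B1 mulmx1 A1.
by rewrite mulmxA -(mulmxA (adjmx B)) A2 mulmx1 B2.
Qed.

Lemma unitary_adj d (A : 'M[C]_d) : Defs.unitarymx A -> Defs.unitarymx (adjmx A).
Proof. by move=> [A1 A2]; rewrite /Defs.unitarymx adjmxK. Qed.

Lemma unitary1 d : Defs.unitarymx (1%:M : 'M[C]_d).
Proof. by rewrite /Defs.unitarymx adjmx1 mulmx1. Qed.

Lemma unitary_refl d (Pi : 'M[C]_d) : Pi *m Pi = Pi -> adjmx Pi = Pi ->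
  Defs.unitarymx (2 *: Pi - 1%:M).
Proof.
move=> PiPi PiH.
have RH : adjmx (2 *: Pi - 1%:M) = 2 *: Pi - 1%:M by rewrite adjmxB adjmxZ conj2 PiH adjmx1.
have RR : (2 *: Pi - 1%:M) *m (2 *: Pi - 1%:M) = 1%:M.
  rewrite mulmxBl !mulmxBr !mul1mx mulmx1 -scalemxAl -scalemxAr PiPi scalerA.
  by rewrite mulr_natl mulr2n scalerDl addrK opprB addrC subrK.
by rewrite /Defs.unitarymx RH RR.
Qed.

Lemma unitaryN d (A : 'M[C]_d) : Defs.unitarymx A -> Defs.unitarymx (- A).
Proof. by move=> [A1 A2]; rewrite /Defs.unitarymx adjmxN mulNmx mulmxN opprK mulNmx mulmxN opprK. Qed.

Lemma opnorm0_eq m n (M : 'M[C]_(m, n)) : opnorm_le M 0 -> M = 0.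
Proof.
move=> [_ H]; apply/matrixP => i j; rewrite mxE.
have := H (delta_mx j 0); rewrite expr0n /= mul0r.
have -> : M *m delta_mx j 0 = col j M by rewrite colE.
move=> h.
have h0 : vnorm2 (col j M) = 0.
  by apply/eqP; rewrite eq_le h /vnorm2 sumr_ge0 // => k _; rewrite exprn_ge0.
move/eqP: h0; rewrite /vnorm2 psumr_eq0 => [/allP /(_ i)|k _]; last by rewrite exprn_ge0.
rewrite mem_index_enum => /(_ isT) /implyP /(_ isT).
by rewrite sqrf_eq0 normr_eq0 mxE => /eqP.
Qed.

End Kron.

Section Concrete.
Variable C : numClosedFieldType.
Variables n a : nat.
Local Notation D := (2 ^ n * 2 ^ (a + 3))%N.
Local Notation z := (zero_idx (a + 3)).
Local Notation e := (esym (qdim n a)).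

Definition dPi : 'rV[C]_D := \row_k ((sndI k == z)%:R).
Definition Pi : 'M[C]_D := diag_mx dPi.
Definition phi (psi : 'cV[C]_(2 ^ n)) : 'cV[C]_D :=
  \col_k ((sndI k == z)%:R * psi (fstI k) 0).

Lemma PiPi : Pi *m Pi = Pi.
Proof.
rewrite /Pi mul_diag_mx; apply/matrixP => k l; rewrite !mxE.
by case: (sndI k == z); rewrite ?mul1r ?mul0r ?mul0rn.
Qed.

Lemma PiH : adjmx Pi = Pi.
Proof.
apply/matrixP => k l; rewrite !mxE; case: (eqVneq k l) => [->|ne].
  by rewrite !mulr1n rmorph_nat.
have ne' : l != k by rewrite eq_sym.
by rewrite ?(negbTE ne) ?(negbTE ne') !mulr0n rmorph0.
Qed.

Lemma gateU (U : 'M[C]_(2 ^ n * 2 ^ a)) : query_gate QU U = castmx (e, e) (kron U 1%:M). Proof. by []. Qed.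
Lemma gateUinv (U : 'M[C]_(2 ^ n * 2 ^ a)) : query_gate QUinv U = adjmx (query_gate QU U).
Proof. by rewrite gateU adjmx_cast adjmx_kron adjmx1. Qed.

Lemma gate_unitary (U : 'M[C]_(2 ^ n * 2 ^ a)) : Defs.unitarymx U -> Defs.unitarymx (query_gate QU U).
Proof.
move=> [U1 U2]; rewrite /Defs.unitarymx gateU adjmx_cast adjmx_kron adjmx1 !castmx_mulmx !kron_mul U1 U2 mulmx1 kron11.
by rewrite castmx_1.
Qed.

Lemma unindex1 p q (k : 'I_(p * q)) : (mxtens_unindex k).1 = fstI k.
Proof. by apply: val_inj. Qed.
Lemma unindex2 p q (k : 'I_(p * q)) : (mxtens_unindex k).2 = sndI k.
Proof. by apply: val_inj. Qed.

Lemma phi_norm (psi : 'cV[C]_(2 ^ n)) : vnorm2 psi = 1 ->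
  adjmx (phi psi) *m phi psi = 1%:M.
Proof.
move=> h1; apply/matrixP => i j; rewrite !ord1 !mxE eqxx /=.
transitivity (\sum_(k < D) ((fun i => `|psi i 0| ^+ 2) (mxtens_unindex k).1 *
      (fun j : 'I_(2 ^ (a + 3)) => ((j == z)%:R : C)) (mxtens_unindex k).2)).
  apply: eq_bigr => k _; rewrite !mxE unindex1 unindex2 /=.
  case: (sndI k == z); rewrite ?mul1r ?mul0r ?rmorph0 ?mul0r ?mulr0 //.
  by rewrite /= mulr1 normCKC.
rewrite -(@mulr_sum _ _ _ (fun i => `|psi i 0| ^+ 2) (fun j : 'I_(2 ^ (a + 3)) => ((j == z)%:R : C))) -/(vnorm2 psi) h1 mul1r.
by rewrite (bigD1 z) //= big1 ?addr0 // => y /negbTE ->.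
Qed.

Definition Pm (psi : 'cV[C]_(2 ^ n)) : 'M[C]_D := phi psi *m adjmx (phi psi).

Lemma PmH psi : adjmx (Pm psi) = Pm psi.
Proof. by rewrite /Pm adjmx_mul adjmxK. Qed.

Lemma PmPm psi : vnorm2 psi = 1 -> Pm psi *m Pm psi = Pm psi.
Proof.
move=> h; rewrite /Pm mulmxA -(mulmxA (phi psi)) phi_norm // mulmx1 //.
Qed.

Lemma idx_cast (k : 'I_D) (k' : 'I_((2 ^ n * 2 ^ a) * 8)) :
  val k' = val k -> sndI k = z ->
  fstI k' = pidx (fstI k) (zero_idx a) /\ val (sndI k') = 0%N.
Proof.
move=> hk /(congr1 val) /= hm.
have hq x : (x %% 2 ^ (a + 3) = 0 -> x = (x %/ 2 ^ (a + 3)) * 2 ^ a * 8)%N.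
  by move=> hx; rewrite {1}(divn_eq x (2 ^ (a + 3))) hx addn0 expnD -mulnA.
have hk' : val k' = ((k %/ 2 ^ (a + 3)) * 2 ^ a * 8)%N by rewrite hk -(hq _ hm).
split; first by apply: val_inj; rewrite /= hk' mulnK // addn0.
by rewrite /= hk' modnMl.
Qed.

Lemma topblock_eq (psi : 'cV[C]_(2 ^ n)) (U : 'M[C]_(2 ^ n * 2 ^ a)) :
  block_encoding 2 0 U (psi *m adjmx psi) ->
  forall i j, U (pidx i (zero_idx a)) (pidx j (zero_idx a)) = 2^-1 * (psi i 0 * (psi j 0)^*).
Proof.
move=> [_ /opnorm0_eq /eqP]; rewrite subr_eq0 => /eqP h i j.
have := congr1 (fun M : 'M[C]_(2 ^ n) => M i j) h; rewrite /= !mxE big_ord1 !mxE => <-.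
by rewrite mulrA mulVf ?mul1r // pnatr_eq0.
Qed.

Lemma PiQPi (psi : 'cV[C]_(2 ^ n)) (U : 'M[C]_(2 ^ n * 2 ^ a)) :
  block_encoding 2 0 U (psi *m adjmx psi) ->
  Pi *m query_gate QU U *m Pi = 2^-1 *: Pm psi.
Proof.
move=> hU; rewrite /Pi mul_diag_mx mul_mx_diag; apply/matrixP => k l.
rewrite !mxE big_ord1 !mxE gateU castmxE !mxE.
case: (eqVneq (sndI k) z) => hk; last first.
  by rewrite !mul0r mulr0.
case: (eqVneq (sndI l) z) => hl; last first.
  by rewrite !mulr0 !mul0r rmorph0 !mulr0.
rewrite /= !mulr1n !mul1r !mulr1.
have [hk1 hk2] := @idx_cast k (cast_ord (esym (esym (qdim n a))) k) erefl hk.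
have [hl1 hl2] := @idx_cast l (cast_ord (esym (esym (qdim n a))) l) erefl hl.
have -> : sndI (cast_ord (esym (esym (qdim n a))) k) = sndI (cast_ord (esym (esym (qdim n a))) l).
  by apply: val_inj; rewrite hk2 hl2.
by rewrite hk1 hl1 (topblock_eq hU) eqxx mulr1.
Qed.

Lemma PiMPi_entry (M : 'M[C]_D) i j :
  (Pi *m M *m Pi) (pidx i z) (pidx j z) = M (pidx i z) (pidx j z).
Proof.
by rewrite /Pi mul_diag_mx mul_mx_diag !mxE !sndI_pidx eqxx /= !mulr1n mul1r mulr1.
Qed.

Lemma target_entry (psi : 'cV[C]_(2 ^ n)) i j :
  (Pi - 2 *: Pm psi) (pidx i z) (pidx j z) = (1%:M - 2 *: (psi *m adjmx psi)) i j.
Proof.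
rewrite /Pm !mxE !big_ord1 !mxE !sndI_pidx !fstI_pidx pidx_eq eqxx andbT /= !mulr1n !mul1r.
by [].
Qed.

End Concrete.

Theorem lemma5p8 (C : numClosedFieldType) :
  exists K : nat, forall n a : nat, (1 <= n)%N ->
  exists c : circuit C n a,
    (nqueries c <= K)%N /\ circuit_fixed_unitary c /\
    forall (psi : 'cV[C]_(2 ^ n)) (U : 'M[C]_(2 ^ n * 2 ^ a)),
      vnorm2 psi = 1 ->
      block_encoding 2 0 U (psi *m adjmx psi) ->
      block_encoding 1 0 (run c U) (1%:M - 2 *: (psi *m adjmx psi)).
Proof.
exists 6%N => n a _.
set R : 'M[C]_(2 ^ n * 2 ^ (a + 3)) := 2 *: Pi C n a - 1%:M.
set R' : 'M[C]_(2 ^ n * 2 ^ (a + 3)) := 1%:M - 2 *: Pi C n a.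
have uR : Defs.unitarymx R by apply: unitary_refl; [exact: PiPi | exact: PiH].
have uR' : Defs.unitarymx R'.
  by rewrite /R' -opprB; apply: unitaryN.
exists (@Circuit C n a 1%:M [:: (QU, R); (QUinv, R); (QU, R'); (QUinv, R); (QU, R); (QUinv, 1%:M)]).
split; first by [].
split.
  split; first exact: unitary1.
  by case=> [|[|[|[|[|[|i]]]]]] //= _; exact: unitary1.
move=> psi U hpsi hU.
set Q := query_gate QU U.
have uQ : Defs.unitarymx Q by apply: gate_unitary; case: hU.
have [QQ QQ'] := uQ.
set V := Q *m R *m adjmx Q *m R *m Q.
have RH : adjmx R = R by rewrite /R adjmxB adjmxZ conj2 PiH adjmx1.
have VH : adjmx V = adjmx Q *m R *m Q *m R *m adjmx Q.
  by rewrite /V !adjmx_mul RH adjmxK !mulmxA.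
have runE : run (@Circuit C n a 1%:M [:: (QU, R); (QUinv, R); (QU, R'); (QUinv, R); (QU, R); (QUinv, 1%:M)]) U
   = adjmx V *m R' *m V.
  rewrite /run /= !gateUinv -/Q VH /V !mulmxA mul1mx mulmx1 //.
have key' := key QQ QQ' (@PiPi C n a) (@PiH C n a) (@PmPm C n a psi hpsi) (@PmH C n a psi) (@PiQPi C n a psi U hU).
simpl in key'.
rewrite runE; split.
  have uQ' : Defs.unitarymx (adjmx Q) by apply: unitary_adj.
  have uV : Defs.unitarymx V.
    by rewrite /V; apply: unitary_mul => //; apply: unitary_mul => //; apply: unitary_mul => //; apply: unitary_mul.
  by apply: unitary_mul => //; apply: unitary_mul => //; apply: unitary_adj.
have -> : 1 *: topblock (adjmx V *m R' *m V) = 1%:M - 2 *: (psi *m adjmx psi).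
  rewrite scale1r; apply/matrixP => i j.
  have := congr1 (fun M : 'M[C]_(2 ^ n * 2 ^ (a + 3)) => M (pidx i (zero_idx (a + 3))) (pidx j (zero_idx (a + 3)))) key'.
  by rewrite PiMPi_entry target_entry => <-; rewrite /topblock mxE.
rewrite subrr; split => // v.
rewrite mul0mx /vnorm2 big1 ?expr0n ?mul0r // => k _.
by rewrite mxE normr0 expr0n.
Qed.
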